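(* Let $P\subseteq[0,1]^d$ be a $0/1$-polytope and let $\varepsilon\in(0,1)$, $M>0$ be such that every polyhedron $K\subseteq\mathbb{R}^d$ with $P^\uparrow\subseteq K\subseteq(1-\varepsilon)P^\uparrow$ satisfies $\operatorname{xc}(K)\geq M$. Then $P^\uparrow\cap[0,1]^d$ does not admit an $\frac{\varepsilon}{d}$-LEF of size less than $M-3d$.
   Context: $P^\uparrow:=P+\mathbb{R}^d_{\geq0}$. $\operatorname{xc}(K)$ is the minimum number of facets of a polyhedron $Q$ of which $K$ is an affine image. Relative distance: for convex $A\subseteq B\subseteq\mathbb{R}^d$, $\operatorname{rdist}(A,B)=\sup_{\pi}\frac{\sup_{b\in B}\inf_{a\in A}|\pi(b)-\pi(a)|}{\sup_{a,a'\in A}|\pi(a)-\pi(a')|}$ over linear $\pi:\mathbb{R}^d\to\mathbb{R}$ (denominator $\infty$ and $0/0$ read as $0$). An $\varepsilon$-LEF of a convex set $C\subseteq\mathbb{R}^d$ is a pair $(Q,\pi)$, $Q\subseteq\mathbb{R}^\ell$ a polyhedron, $\pi:\mathbb{R}^\ell\to\mathbb{R}^d$ affine, with $C\subseteq\pi(Q)$ and $\operatorname{rdist}(C,\pi(Q))\leq\varepsilon$; its size is the number of facets of $Q$. *)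

(* Defs.v *)
From HB Require Import structures.
From mathcomp Require Import all_boot all_order all_algebra.
From mathcomp Require Import boolp classical_sets reals constructive_ereal ereal.
Set Implicit Arguments. Unset Strict Implicit. Unset Printing Implicit Defensive.
Import Order.TTheory GRing.Theory Num.Theory.
Local Open Scope classical_set_scope.
Local Open Scope ring_scope.

Section Defs.
Variable R : realType.

(* the linear functional x |-> <c, x> ; every linear map R^d -> R is of this form *)
Definition dotv d (c x : 'rV[R]_d) : R := \sum_(i < d) c 0 i * x 0 i.

Definition zero_one_vec d (v : 'rV[R]_d) : Prop := forall i, v 0 i = 0 \/ v 0 i = 1.

Definition conv_hull d (V : seq 'rV[R]_d) : set 'rV[R]_d :=
  [set x | exists lam : 'I_(size V) -> R,
     (forall j, 0 <= lam j) /\ \sum_j lam j = 1 /\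
     x = \sum_(j < size V) lam j *: nth 0 V j].

Definition zero_one_polytope d (P : set 'rV[R]_d) : Prop :=
  exists V : seq 'rV[R]_d, (forall v, v \in V -> zero_one_vec v) /\ P = conv_hull V.

(* P^up = P + R^d_{>=0} *)
Definition up_hull d (P : set 'rV[R]_d) : set 'rV[R]_d :=
  [set x | exists2 p, P p & forall i, p 0 i <= x 0 i].

Definition scale_set d (a : R) (S : set 'rV[R]_d) : set 'rV[R]_d :=
  [set a *: x | x in S].

Definition unit_cube d : set 'rV[R]_d := [set x | forall i, 0 <= x 0 i <= 1].

Definition has_descr l (Q : set 'rV[R]_l) (m : nat) : Prop :=
  exists k (A : 'M[R]_(l, m)) (b : 'rV[R]_m) (E : 'M[R]_(l, k)) (e : 'rV[R]_k),
    Q = [set y | (forall i, (y *m A) 0 i <= b 0 i) /\ y *m E = e].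

Definition is_polyhedron l (Q : set 'rV[R]_l) : Prop := exists m, has_descr Q m.

(* Number of facets of a polyhedron Q: the minimal number of inequalities in a
   description of Q by linear inequalities and equations. *)
Definition num_facets l (Q : set 'rV[R]_l) : \bar R :=
  ereal_inf [set x | exists m, has_descr Q m /\ x = (m%:R)%:E].

Definition aff_image l d (T : 'M[R]_(l, d)) (t : 'rV[R]_d) (Q : set 'rV[R]_l)
  : set 'rV[R]_d := [set y *m T + t | y in Q].

Definition xc d (K : set 'rV[R]_d) : \bar R :=
  ereal_inf [set x | exists l (Q : set 'rV[R]_l) (T : 'M[R]_(l, d)) (t : 'rV[R]_d),
     is_polyhedron Q /\ K = aff_image T t Q /\ x = num_facets Q].

Definition rd_num d (A B : set 'rV[R]_d) (c : 'rV[R]_d) : \bar R :=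
  ereal_sup [set ereal_inf [set (`|dotv c b - dotv c a|)%:E | a in A] | b in B].

Definition rd_den d (A : set 'rV[R]_d) (c : 'rV[R]_d) : \bar R :=
  ereal_sup [set x | exists a a', A a /\ A a' /\ x = (`|dotv c a - dotv c a'|)%:E].

(* quotient with the conventions: denominator +oo -> 0, 0/0 -> 0, positive/0 -> +oo *)
Definition rd_ratio (num den : \bar R) : \bar R :=
  if den == +oo%E then 0%E
  else if den == 0%E then (if num == 0%E then 0%E else +oo%E)
  else (num * ((fine den)^-1)%:E)%E.

Definition rdist d (A B : set 'rV[R]_d) : \bar R :=
  ereal_sup [set rd_ratio (rd_num A B c) (rd_den A c) | c in [set: 'rV[R]_d]].

Definition is_LEF d (eps : R) (C : set 'rV[R]_d) l (Q : set 'rV[R]_l)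
  (T : 'M[R]_(l, d)) (t : 'rV[R]_d) : Prop :=
  is_polyhedron Q /\ C `<=` aff_image T t Q /\ (rdist C (aff_image T t Q) <= eps%:E)%E.

End Defs.

(* Main.v *)
Require Import Defs.
From HB Require Import structures.
From mathcomp Require Import all_boot all_order all_algebra.
From mathcomp Require Import boolp classical_sets reals constructive_ereal ereal.
From mathcomp Require Import ring lra.
Set Implicit Arguments. Unset Strict Implicit. Unset Printing Implicit Defensive.
Import Order.TTheory GRing.Theory Num.Theory.
Local Open Scope classical_set_scope.
Local Open Scope ring_scope.

Section Aux.
Variable R : realType.

Lemma dotvDr n (c x y : 'rV[R]_n) : dotv c (x + y) = dotv c x + dotv c y.
Proof. by rewrite /dotv -big_split; apply: eq_bigr => i _; rewrite mxE mulrDr. Qed.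

Lemma dotvDl n (c c' x : 'rV[R]_n) : dotv (c + c') x = dotv c x + dotv c' x.
Proof. by rewrite /dotv -big_split; apply: eq_bigr => i _; rewrite mxE mulrDl. Qed.

Lemma dotvZr n (c x : 'rV[R]_n) a : dotv c (a *: x) = a * dotv c x.
Proof. rewrite /dotv mulr_sumr; apply: eq_bigr => i _; rewrite mxE; ring. Qed.

Lemma dotvZl n (c x : 'rV[R]_n) a : dotv (a *: c) x = a * dotv c x.
Proof. rewrite /dotv mulr_sumr; apply: eq_bigr => i _; rewrite mxE; ring. Qed.

Lemma dotvNl n (c x : 'rV[R]_n) : dotv (- c) x = - dotv c x.
Proof. by rewrite -scaleN1r dotvZl mulN1r. Qed.

Lemma dotv0l n (x : 'rV[R]_n) : dotv 0 x = 0.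
Proof. by rewrite /dotv big1 // => i _; rewrite mxE mul0r. Qed.

Lemma dotv0r n (x : 'rV[R]_n) : dotv x 0 = 0.
Proof. by rewrite /dotv big1 // => i _; rewrite mxE mulr0. Qed.

Lemma dotv_row_mx n1 n2 (a : 'rV[R]_n1) (b : 'rV[R]_n2) x y :
  dotv (row_mx a b) (row_mx x y) = dotv a x + dotv b y.
Proof.
by rewrite /dotv big_split_ord /=; congr (_ + _); apply: eq_bigr => i _;
  rewrite ?row_mxEl ?row_mxEr.
Qed.

Lemma dotv_delta n (j : 'I_n) (x : 'rV[R]_n) : dotv (delta_mx 0 j) x = x 0 j.
Proof.
rewrite /dotv (bigD1 j) //= big1 ?addr0.
  by rewrite mxE !eqxx mul1r.
by move=> i /negbTE nij; rewrite mxE nij andbF mul0r.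
Qed.

Lemma dotv_deltar n (j : 'I_n) (c : 'rV[R]_n) : dotv c (delta_mx 0 j) = c 0 j.
Proof.
rewrite /dotv (bigD1 j) //= big1 ?addr0.
  by rewrite mxE !eqxx mulr1.
by move=> i /negbTE nij; rewrite mxE nij andbF mulr0.
Qed.

Definition sat n (s : seq ('rV[R]_n * R)) (x : 'rV[R]_n) :=
  forall p, p \in s -> dotv p.1 x <= p.2.

Lemma sat_cat n (s1 s2 : seq ('rV[R]_n * R)) x :
  sat (s1 ++ s2) x <-> sat s1 x /\ sat s2 x.
Proof.
split=> [H|[H1 H2] p]; first by split=> p ps; apply: H; rewrite mem_cat ps ?orbT.
by rewrite mem_cat => /orP[]; [apply: H1|apply: H2].
Qed.

Lemma sep_exists (L U : seq R) :
  (forall l u, l \in L -> u \in U -> l <= u) ->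
  exists r, (forall l, l \in L -> l <= r) /\ (forall u, u \in U -> r <= u).
Proof.
elim: L => [|a L IH] H.
  elim: U {H} => [|b U [r [_ Hr]]]; first by exists 0.
  exists (Num.min b r); split => // u; rewrite inE => /orP[/eqP->|/Hr ur].
    by rewrite ge_min lexx.
  by rewrite ge_min ur orbT.
have [r [Hl Hu]] : exists r, (forall l, l \in L -> l <= r) /\ (forall u, u \in U -> r <= u).
  by apply: IH => l u lL uU; apply: H; rewrite // inE lL orbT.
exists (Num.max a r); split.
  move=> l; rewrite inE => /orP[/eqP->|/Hl lr]; first by rewrite le_max lexx.
  by rewrite le_max lr orbT.
move=> u uU; rewrite ge_max Hu // andbT; apply: H => //; by rewrite inE eqxx.
Qed.

Definition combo n (j : 'I_n) (p q : 'rV[R]_n * R) : 'rV[R]_n * R :=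
  ((- q.1 0 j) *: p.1 + p.1 0 j *: q.1, (- q.1 0 j) * p.2 + p.1 0 j * q.2).

Lemma fm n (s : seq ('rV[R]_n * R)) (j : 'I_n) :
  exists s', forall x, sat s' x <-> exists r : R, sat s (x + r *: delta_mx 0 j).
Proof.
set P := [seq p : 'rV[R]_n * R <- s | 0 < p.1 0 j].
set N := [seq p : 'rV[R]_n * R <- s | p.1 0 j < 0].
exists ([seq p : 'rV[R]_n * R <- s | p.1 0 j == 0] ++
  [seq combo j p q | p <- P, q <- N]) => x.
have dE c r : dotv c (x + r *: delta_mx 0 j) = dotv c x + r * c 0 j.
  by rewrite dotvDr dotvZr dotv_deltar.
split=> [/sat_cat [H0 H1]|[r Hr]]; last first.
  apply/sat_cat; split.
    move=> p; rewrite mem_filter => /andP[/eqP pj ps].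
    by have := Hr p ps; rewrite dE pj mulr0 addr0.
  move=> pq /allpairsP [[p q] /= [pP qN ->]]; rewrite /combo /=.
  move: pP qN; rewrite !mem_filter => /andP[pj ps] /andP[qj qs].
  have := Hr p ps; have := Hr q qs; rewrite !dE dotvDl !dotvZl => h1 h2.
  nra.
pose L := [seq (q.2 - dotv q.1 x) / q.1 0 j | q <- N].
pose U := [seq (p.2 - dotv p.1 x) / p.1 0 j | p <- P].
have [|r [Hl Hu]] := @sep_exists L U.
  move=> l u /mapP[q qN ->] /mapP[p pP ->].
  have := H1 _ (allpairs_f (combo j) pP qN).
  move: pP qN; rewrite !mem_filter => /andP[pj ps] /andP[qj qs].
  rewrite /= dotvDl !dotvZl => h.
  rewrite ler_ndivrMr // mulrAC ler_pdivrMr //.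

  nra.
exists r => p ps.
rewrite dE.
case: (ltgtP (p.1 0 j) 0) => pj.
- have pN : p \in N by rewrite mem_filter pj ps.
  have := Hl _ (map_f (fun q => (q.2 - dotv q.1 x) / q.1 0 j) pN).
  by rewrite ler_ndivrMr // => h; lra.
- have pP : p \in P by rewrite mem_filter pj ps.
  have := Hu _ (map_f (fun q => (q.2 - dotv q.1 x) / q.1 0 j) pP).
  by rewrite ler_pdivlMr // => h; lra.
- by rewrite pj mulr0 addr0; apply: H0; rewrite mem_filter pj eqxx.
Qed.


Lemma sat_map n (T : eqType) (f : T -> 'rV[R]_n * R) (s : seq T) x :
  sat (map f s) x <-> forall p, p \in s -> dotv (f p).1 x <= (f p).2.
Proof.
split=> [H p ps|H p /mapP[q qs ->]]; last exact: H.
by apply: H; apply: map_f.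
Qed.

Lemma fm_seq n (js : seq 'I_n) (s : seq ('rV[R]_n * R)) :
  exists s', forall x, sat s' x <->
    exists r : 'rV[R]_n, (forall i, i \notin js -> r 0 i = 0) /\ sat s (x + r).
Proof.
elim: js s => [|j js IH] s.
  exists s => x; split=> [H|[r [r0 H]]].
    by exists 0; split=> [i _|]; rewrite ?mxE ?addr0.
  have rz : r = 0 by apply/matrixP => a b; rewrite ord1 mxE r0.
  by rewrite rz addr0 in H.
have [s0 H0] := fm s j.
have [s' H'] := IH s0.
exists s' => x; split.
  move=> /H' [r [rs /H0 [rho Hr]]].
  exists (r + rho *: delta_mx 0 j); split; last by rewrite addrA.
  move=> i; rewrite inE negb_or => /andP[ij ijs].
  by rewrite !mxE rs // (negbTE ij) andbF mulr0 addr0.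
move=> [r [rs Hr]]; apply/H'.
exists (r - r 0 j *: delta_mx 0 j); split.
  move=> i ijs; rewrite !mxE eqxx /=.
  case: (eqVneq i j) => [->|ij]; first by rewrite mulr1 subrr.
  by rewrite mulr0 subr0 rs // inE negb_or ij.
apply/H0; exists (r 0 j).
by rewrite -addrA subrK.
Qed.

Definition ipoly n (Q : set 'rV[R]_n) := exists s, Q = [set x | sat s x].

Definition colv l d (j : 'I_d) (T : 'M[R]_(l, d)) : 'rV[R]_l := \row_i T i j.

Lemma dotv_colv l d (j : 'I_d) (T : 'M[R]_(l, d)) y :
  dotv (colv j T) y = (y *m T) 0 j.
Proof. by rewrite /dotv !mxE; apply: eq_bigr => i _; rewrite mxE mulrC. Qed.

Lemma dotv_rsub m n (a : 'rV[R]_(m + n)) x :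
  dotv (rsubmx a) x = dotv a (row_mx 0 x).
Proof. by rewrite -{2}(hsubmxK a) dotv_row_mx dotv0r add0r. Qed.

Lemma ipoly_image l d (Q : set 'rV[R]_l) (T : 'M[R]_(l, d)) t :
  ipoly Q -> ipoly (aff_image T t Q).
Proof.
move=> [s ->].
pose s1 := map (fun p : 'rV[R]_l * R => (row_mx p.1 (0 : 'rV[R]_d), p.2)) s ++
  ([seq (row_mx (- colv j T) (delta_mx 0 j), t 0 j) | j <- enum 'I_d] ++
   [seq (row_mx (colv j T) (- delta_mx 0 j), - t 0 j) | j <- enum 'I_d]).
have S1 u x : sat s1 (row_mx u x) <-> sat s u /\ x = u *m T + t.
  split.
    move=> /sat_cat [/sat_map H1 /sat_cat [/sat_map H2 /sat_map H3]]; split.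
      by move=> p ps; have := H1 p ps; rewrite /= dotv_row_mx dotv0l addr0.
    apply/matrixP => a b; rewrite ord1 !mxE.
    have := H2 b (mem_enum _ b); have := H3 b (mem_enum _ b).
    rewrite /= !dotv_row_mx !dotvNl !dotv_colv !dotv_delta !mxE => h1 h2.
    lra.
  move=> [H1 ->]; apply/sat_cat; split; first apply/sat_map.
    by move=> p ps; rewrite /= dotv_row_mx dotv0l addr0; apply: H1.
  apply/sat_cat; split; apply/sat_map => j _;
    rewrite /= !dotv_row_mx !dotvNl !dotv_colv !dotv_delta !mxE; lra.
pose js := [seq lshift d i | i <- enum 'I_l].
have [s2 H2] := fm_seq js s1.
exists (map (fun p : 'rV[R]_(l + d) * R => (rsubmx p.1, p.2)) s2).
apply/seteqP; split => x /=.
  move=> [y Qy <-]; apply/sat_map => p ps /=; rewrite dotv_rsub.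
  have : sat s2 (row_mx 0 (y *m T + t)).
    apply/H2; exists (row_mx y 0); split.
      move=> i; case: (splitP i) => [i' E|i' E].
        have -> : i = lshift d i' by apply/val_inj.
        by rewrite /js map_f // mem_enum.
      have -> : i = rshift l i' by apply/val_inj.
      by rewrite row_mxEr mxE.
    by rewrite add_row_mx add0r addr0; apply/S1.
  by apply.
move=> /sat_map Hx.
have : sat s2 (row_mx 0 x) by move=> p ps; rewrite -dotv_rsub; apply: Hx.
move=> /H2 [r [rs Hr]].
have rE : r = row_mx (lsubmx r) 0.
  rewrite -{1}(hsubmxK r); congr row_mx.
  apply/matrixP => a b; rewrite ord1 !mxE rs //.
  apply/mapP => -[i _] /(congr1 val) /= E.
  by have := ltn_ord i; rewrite -E ltnNge leq_addr.
move: Hr; rewrite rE add_row_mx add0r addr0 => /S1 [Hs ->].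
by exists (lsubmx r).
Qed.


Definition eqset n (s se : seq ('rV[R]_n * R)) : set 'rV[R]_n :=
  [set y | sat s y /\ (forall p, p \in se -> dotv p.1 y = p.2)].

Lemma mulmx_dotv l m (A : 'M[R]_(l, m)) y i : (y *m A) 0 i = dotv (colv i A) y.
Proof. by rewrite dotv_colv. Qed.

Lemma descr_of_seq l (s se : seq ('rV[R]_l * R)) : has_descr (eqset s se) (size s).
Proof.
exists (size se), (\matrix_(j < l, i < size s) (nth (0,0) s i).1 0 j),
  (\row_(i < size s) (nth (0,0) s i).2),
  (\matrix_(j < l, i < size se) (nth (0,0) se i).1 0 j),
  (\row_(i < size se) (nth (0,0) se i).2).
have cE n (s0 : seq ('rV[R]_l * R)) (i : 'I_n) (y : 'rV[R]_l) (A : 'M[R]_(l, n)) :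
    A = \matrix_(j < l, i < n) (nth (0,0) s0 i).1 0 j ->
    (y *m A) 0 i = dotv (nth (0,0) s0 i).1 y.
  by move=> ->; rewrite mulmx_dotv /dotv; apply: eq_bigr => j _; rewrite !mxE.
apply/seteqP; split => y /= [H1 H2]; split.
- by move=> i; rewrite (cE _ s) // mxE; apply: H1; exact: mem_nth.
- apply/matrixP => a i; rewrite ord1 (cE _ se) // mxE; apply: H2; exact: mem_nth.
- move=> p ps; have := H1 (Ordinal (etrans (index_mem p s) ps) : 'I_(size s)).
  by rewrite (cE _ s) // mxE /= nth_index.
- move=> p ps; have := congr1 (fun M : 'rV[R]_(size se) => M 0 (Ordinal (etrans (index_mem p se) ps) : 'I_(size se))) H2.
  by rewrite /= (cE _ se) // mxE /= nth_index.
Qed.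

Lemma seq_of_descr l (Q : set 'rV[R]_l) m : has_descr Q m ->
  exists s se, size s = m /\ Q = eqset s se.
Proof.
move=> [k [A [b [E [e ->]]]]].
exists [seq (colv i A, b 0 i) | i <- enum 'I_m], [seq (colv i E, e 0 i) | i <- enum 'I_k].
split; first by rewrite size_map size_enum_ord.
apply/seteqP; split => y /= [H1 H2]; split.
- by apply/sat_map => i _ /=; rewrite -mulmx_dotv.
- by move=> p /mapP[i _ ->] /=; rewrite -mulmx_dotv H2.
- by move=> i; rewrite mulmx_dotv; apply: (H1 (colv i A, b 0 i)); apply: map_f; rewrite mem_enum.
- apply/matrixP => a i; rewrite ord1 mulmx_dotv.
  by apply: (H2 (colv i E, e 0 i)); apply: map_f; rewrite mem_enum.
Qed.

Lemma ipoly_eqset n (s se : seq ('rV[R]_n * R)) : ipoly (eqset s se).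
Proof.
exists (s ++ se ++ map (fun p => (- p.1, - p.2)) se).
apply/seteqP; split => y /=.
  move=> [H1 H2]; apply/sat_cat; split => //; apply/sat_cat; split.
    by move=> p ps; rewrite H2.
  by apply/sat_map => p ps /=; rewrite dotvNl H2.
move=> /sat_cat [H1 /sat_cat [H2 /sat_map H3]]; split => // p ps.
by apply/eqP; rewrite eq_le H2 //=; have := H3 p ps; rewrite /= dotvNl lerN2.
Qed.

Lemma poly_ipoly n (Q : set 'rV[R]_n) : is_polyhedron Q <-> ipoly Q.
Proof.
split.
  by move=> [m /seq_of_descr [s [se [_ ->]]]]; apply: ipoly_eqset.
move=> [s ->]; exists (size s).
have -> : [set x | sat s x] = eqset s [::] by apply/seteqP; split => y /= => [H|[]//].
exact: descr_of_seq.
Qed.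

End Aux.


Section Aux2.
Variable R : realType.

Lemma zo_bnd d (v : 'rV[R]_d) i : zero_one_vec v -> 0 <= v 0 i <= 1.
Proof. by move=> /(_ i) [->|->]; rewrite lexx ?ler01. Qed.

Lemma conv_cube d (V : seq 'rV[R]_d) :
  (forall v, v \in V -> zero_one_vec v) -> conv_hull V `<=` @unit_cube R d.
Proof.
move=> H x [lam [l0 [l1 ->]]] i.
rewrite summxE; apply/andP; split.
  apply: sumr_ge0 => j _; rewrite mxE; apply: mulr_ge0 => //.
  by case/andP: (zo_bnd i (H _ (mem_nth 0 (ltn_ord j)))).
rewrite -l1; apply: ler_sum => j _; rewrite mxE.
have /andP[h0 h1] := zo_bnd i (H _ (mem_nth 0 (ltn_ord j))).
have := l0 j; nra.
Qed.

Lemma conv_nth d (V : seq 'rV[R]_d) (j : 'I_(size V)) : conv_hull V (nth 0 V j).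
Proof.
exists (fun i => (i == j)%:R); split; first by move=> i; rewrite ler0n.
split.
  by rewrite (bigD1 j) //= eqxx big1 ?addr0 // => i /negbTE ->.
rewrite (bigD1 j) //= eqxx scale1r big1 ?addr0 // => i /negbTE ->.
by rewrite scale0r.
Qed.

Lemma dotv_sumr n m (c : 'rV[R]_n) (F : 'I_m -> 'rV[R]_n) :
  dotv c (\sum_j F j) = \sum_j dotv c (F j).
Proof. by apply: (big_morph _ (@dotvDr R n c) (dotv0r c)). Qed.

Lemma up_hull_ipoly d (V : seq 'rV[R]_d) : ipoly (up_hull (conv_hull V)).
Proof.
set n := size V.
pose Vm := \matrix_(j < n) nth 0 V j.
pose sL : seq ('rV[R]_(n + d) * R) := [seq (- delta_mx 0 i, 0) | i <- enum 'I_(n + d)].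
pose seL : seq ('rV[R]_(n + d) * R) := [:: (row_mx (const_mx 1 : 'rV[R]_n) (0 : 'rV[R]_d), 1)].
suff -> : up_hull (conv_hull V) = aff_image (col_mx Vm 1%:M) 0 (eqset sL seL).
  by apply: ipoly_image; apply: ipoly_eqset.
have VmE (lam : 'rV[R]_n) : lam *m Vm = \sum_j lam 0 j *: nth 0 V j.
  by rewrite mulmx_sum_row; apply: eq_bigr => j _; rewrite rowK.
have sumE (lam : 'rV[R]_n) : dotv (const_mx 1) lam = \sum_j lam 0 j.
  by apply: eq_bigr => j _; rewrite mxE mul1r.
apply/seteqP; split => x /=.
  move=> [p [lam [l0 [l1 ->]]] px].
  exists (row_mx (\row_j lam j) (x - \sum_j lam j *: nth 0 V j)).
    split.
      apply/sat_map => i _ /=; rewrite dotvNl dotv_delta oppr_le0.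
      case: (splitP i) => [i' E|i' E].
        have -> : i = lshift d i' by apply/val_inj.
        by rewrite row_mxEl mxE.
      have -> : i = rshift n i' by apply/val_inj.
      by rewrite row_mxEr !mxE subr_ge0.
    move=> q; rewrite inE => /eqP -> /=.
    by rewrite dotv_row_mx dotv0l addr0 sumE -l1; apply: eq_bigr => j _; rewrite mxE.
  rewrite mul_row_col mulmx1 addr0 VmE.
  rewrite (eq_bigr (fun j => lam j *: nth 0 V j)); last by move=> j _; rewrite mxE.
  by rewrite addrC subrK.
move=> [w [Hs He] <-].
have wnn i : 0 <= w 0 i.
  have := Hs _ (map_f (fun i => (- delta_mx 0 i : 'rV[R]_(n + d), 0)) (mem_enum _ i)).
  by rewrite /= dotvNl dotv_delta oppr_le0.
exists (lsubmx w *m Vm).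
  exists (fun j => lsubmx w 0 j); split; first by move=> j; rewrite mxE.
  split; last by rewrite VmE.
  have := He _ (mem_head _ _); rewrite /= -{1}(hsubmxK w) dotv_row_mx dotv0l addr0 sumE.
  done.
move=> i; rewrite -{2}(hsubmxK w) mul_row_col mulmx1 addr0 [X in _ <= X]mxE lerDl.
by rewrite mxE wnn.
Qed.


Lemma sep_main d (V : seq 'rV[R]_d) (eps : R) (A : set 'rV[R]_d) (v0j : 'I_(size V)) :
  (0 < d)%N -> (forall v, v \in V -> zero_one_vec v) -> 0 < eps < 1 ->
  (rdist (up_hull (conv_hull V) `&` @unit_cube R d) A <= (eps / d%:R)%:E)%E ->
  forall x, A x -> unit_cube x -> up_hull (conv_hull V) ((1 - eps)^-1 *: x).
Proof.
move=> d0 V01 /andP[e0 e1] rd x Ax cx.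
set P := conv_hull V; set C := up_hull P `&` @unit_cube R d.
have [sP HP] := up_hull_ipoly V.
set y := (1 - eps)^-1 *: x.
have e1' : 0 < 1 - eps by rewrite subr_gt0.
have y0 i : 0 <= y 0 i.
  rewrite mxE; apply: mulr_ge0; first by rewrite invr_ge0 ltW.
  by case/andP: (cx i).
apply: contrapT => ny.
have [p [ps py]] : exists p, p \in sP /\ p.2 < dotv p.1 y.
  apply: contrapT => H; apply: ny; rewrite HP => q qs; rewrite leNgt; apply/negP => lt.
  by apply: H; exists q.
set c := - p.1; set del := - p.2.
have cP u : up_hull P u -> del <= dotv c u.
  by rewrite HP => /(_ p ps); rewrite /c /del dotvNl lerN2.
have cy : dotv c y < del by rewrite /c /del dotvNl ltrN2.
set v0 := nth 0 V v0j.
have Pv0 : P v0 := conv_nth v0j.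
have uPv0 : up_hull P v0 by exists v0.
have c0 j : 0 <= c 0 j.
  rewrite leNgt; apply/negP => cj.
  set D := dotv c v0 - del.
  have D0 : 0 <= D by rewrite subr_ge0 cP.
  set r := (D + 1) / (- c 0 j).
  have r0 : 0 <= r by apply: divr_ge0; lra.
  have Hu : up_hull P (v0 + r *: delta_mx 0 j).
    exists v0 => // i; rewrite !mxE lerDl; apply: mulr_ge0 => //.
  have := cP _ Hu.
  rewrite dotvDr dotvZr dotv_deltar /r.
  have -> : (D + 1) / - c 0 j * c 0 j = - (D + 1).
    by field; rewrite lt_eqF.
  rewrite /D; lra.
have del0 : 0 < del.
  apply: le_lt_trans cy; apply: sumr_ge0 => i _; exact: mulr_ge0.
set c' := \row_i Num.min (c 0 i) del.
have c'0 i : 0 <= c' 0 i by rewrite mxE le_min c0 ltW.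
have c'c i : c' 0 i <= c 0 i by rewrite mxE ge_min lexx.
have c'd i : c' 0 i <= del by rewrite mxE ge_min lexx orbT.
have key0 (j : 'I_(size V)) : del <= dotv c' (nth 0 V j).
  set v := nth 0 V j; have zv := V01 _ (mem_nth 0 (ltn_ord j)).
  case: (pselect (exists i, v 0 i = 1 /\ del <= c 0 i)) => [[i [vi ci]]|nex].
    rewrite /dotv (bigD1 i) //= vi mulr1 mxE min_r // lerDl.
    apply: sumr_ge0 => k _; apply: mulr_ge0 => //.
    by case/andP: (zo_bnd k zv).
  have -> : dotv c' v = dotv c v.
    apply: eq_bigr => i _; case: (zv i) => vi; rewrite vi ?mulr0 ?mulr1 //.
    rewrite mxE min_l //; apply: ltW; rewrite ltNge; apply/negP => h; apply: nex.
    by exists i.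
  by apply: cP; exists v => //; apply: conv_nth.
have key1 a : C a -> del <= dotv c' a.
  move=> [[pp [lam [l0 [l1 ppE]]] ppa] _].
  apply: (@le_trans _ _ (dotv c' pp)).
    rewrite ppE dotv_sumr.
    rewrite -[X in X <= _]mul1r -l1 mulr_suml; apply: ler_sum => j _.
    by rewrite dotvZr; apply: ler_wpM2l.
  by apply: ler_sum => i _; apply: ler_wpM2l.
have key2 a : C a -> 0 <= dotv c' a <= d%:R * del.
  move=> [_ ca]; apply/andP; split.
    apply: sumr_ge0 => i _; apply: mulr_ge0 => //.
    by case/andP: (ca i).
  apply: (@le_trans _ _ (\sum_(i < d) del)).
    apply: ler_sum => i _; have := c'0 i; have := c'd i; have := ca i.
    move=> /andP[h1 h2] h3 h4; nra.
  by rewrite sumr_const card_ord mulr_natl.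
have v0C : C v0 by split; [exact: uPv0|exact: (conv_cube V01 Pv0)].
have key3 : (1 - eps) * del <= dotv c' x.
  rewrite leNgt; apply/negP => hlt.
  set g := (1 - eps) * del - dotv c' x.
  have g0 : 0 < g by rewrite subr_gt0.
  have hnum : ((eps * del + g)%:E <= rd_num C A c')%E.
    apply: ereal_sup_ge.
    exists (ereal_inf [set (`|dotv c' x - dotv c' a|)%:E | a in C]); first by exists x.
    apply/ereal_infP => _ [a Ca <-]; rewrite lee_fin.
    have h := key1 a Ca.
    rewrite ler_normr; apply/orP; right; rewrite /g; lra.
  have ub : (rd_den C c' <= (d%:R * del)%:E)%E.
    apply/ereal_supP => _ [a [a' [Ca [Ca' ->]]]]; rewrite lee_fin.
    have := key2 a Ca; have := key2 a' Ca' => /andP[h1 h2] /andP[h3 h4].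
    rewrite ler_norml; apply/andP; split; lra.
  have lb : (0%:E <= rd_den C c')%E.
    apply: ereal_sup_ge; exists 0%:E => //; exists v0, v0; split=> //; split=> //.
    by rewrite subrr normr0.
  have rc : (rd_ratio (rd_num C A c') (rd_den C c') <= (eps / d%:R)%:E)%E.
    apply: le_trans rd; apply: ereal_sup_ubound; by exists c'.
  move: rc ub lb; rewrite /rd_ratio.
  case: (rd_den C c') => [D| |] //= rc ub lb.
  rewrite lee_fin in ub; rewrite lee_fin in lb.
  have d0' : 0 < d%:R :> R by rewrite ltr0n.
  have pos : 0 < eps * del + g by nra.
  move: rc; case: eqP => [[D00]|Dn0].
    have -> : (rd_num C A c' == 0%E) = false.
      apply/negbTE/eqP => h; move: hnum; rewrite h lee_fin; lra.
    by [].
  have Dp : 0 < D by rewrite lt_neqAle eq_sym lb andbT; apply/eqP => h; apply: Dn0; rewrite h.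
  move=> rc.
  have h : ((eps * del + g)%:E * (D^-1)%:E <= (eps / d%:R)%:E)%E.
    by apply: le_trans rc; apply: lee_wpmul2r => //; rewrite lee_fin invr_ge0 ltW.
  move: h; rewrite -EFinM lee_fin ler_pdivrMr // => h.
  have h2 : eps / d%:R * D <= eps / d%:R * (d%:R * del).
    by apply: ler_wpM2l => //; apply: divr_ge0; lra.
  have h3 : eps / d%:R * (d%:R * del) = eps * del by field; rewrite lt0r_neq0.
  lra.
have key4 : dotv c' y <= dotv c y.
  by apply: ler_sum => i _; apply: ler_wpM2r.
have : del <= dotv c' y.
  rewrite /y dotvZr.
  apply: (@le_trans _ _ ((1 - eps)^-1 * ((1 - eps) * del))).
    by rewrite mulrA mulVf ?mul1r // lt0r_neq0.
  by apply: ler_wpM2l => //; rewrite invr_ge0 ltW.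
lra.
Qed.

End Aux2.


Lemma xc_set0 (R : realType) d : (xc (set0 : set 'rV[R]_d) <= 0%:E)%E.
Proof.
apply: (@le_trans _ _ (num_facets (set0 : set 'rV[R]_0))).
  apply: ereal_inf_lbound; exists 0%N, set0, 0, 0; split.
    exists 1%N; exists 1%N, 0, 0, 0, (const_mx 1).
    apply/seteqP; split => y //= [_].
    rewrite mulmx0 => /(congr1 (fun M : 'rV[R]_1 => M 0 0)); rewrite !mxE => /eqP.
    by rewrite eq_sym oner_eq0.
  split => //; apply/seteqP; split => x //= [y []].
rewrite /num_facets; apply: ereal_inf_lbound; exists 0%N; split => //.
exists 1%N, 0, 0, 0, (const_mx 1).
apply/seteqP; split => y //= [_].
rewrite mulmx0 => /(congr1 (fun M : 'rV[R]_1 => M 0 0)); rewrite !mxE => /eqP.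
by rewrite eq_sym oner_eq0.
Qed.

Theorem mainTheorem14 (R : realType) (d : nat) (P : set 'rV[R]_d) (eps M : R) :
  (0 < d)%N ->
  zero_one_polytope P ->
  0 < eps < 1 -> 0 < M ->
  (forall K : set 'rV[R]_d, is_polyhedron K ->
     up_hull P `<=` K -> K `<=` scale_set (1 - eps) (up_hull P) ->
     (M%:E <= xc K)%E) ->
  forall (l : nat) (Q : set 'rV[R]_l) (T : 'M[R]_(l, d)) (t : 'rV[R]_d),
    is_LEF (eps / d%:R) (up_hull P `&` @unit_cube R d) Q T t ->
    ((M - 3 * d%:R)%:E <= num_facets Q)%E.
Proof.
move=> d0 [V [V01 ->]] eps01 M0 Hyp l Q T t [PQ [CQ rd]].
case: V V01 Hyp rd CQ => [|v0 V'] V01 Hyp rd CQ.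
  have E0 : up_hull (conv_hull ([::] : seq 'rV[R]_d)) = set0.
    apply/seteqP; split => x //= [p [lam [_ [l1 _]]] _].
    by move: l1; rewrite big_ord0 => /eqP; rewrite eq_sym oner_eq0.
  have := Hyp set0; rewrite E0 => /(_ _ (@subset_refl _ _) (@sub0set _ _)).
  have HH : is_polyhedron (set0 : set 'rV[R]_d).
    apply/poly_ipoly; exists [:: (0, -1)]; apply/seteqP; split => x //=.
    by move=> /(_ _ (mem_head _ _)); rewrite /= dotv0l ler0N1.
  move=> /(_ HH) h; have h' : M <= 0 by rewrite -lee_fin; exact: le_trans h (xc_set0 _ _).
  exfalso; lra.
set V := v0 :: V'.
rewrite /num_facets; apply/ereal_infP => _ [m [hm ->]].
have [s [se [sz QE]]] := seq_of_descr hm.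
pose liftL (p : 'rV[R]_l * R) : 'rV[R]_(l + d) * R := (row_mx p.1 0, p.2).
pose f1 (j : 'I_d) : 'rV[R]_(l + d) * R := (row_mx (colv j T) 0, 1 - t 0 j).
pose f2 (j : 'I_d) : 'rV[R]_(l + d) * R := (row_mx (- colv j T) 0, t 0 j).
pose f3 (j : 'I_d) : 'rV[R]_(l + d) * R := (row_mx 0 (- delta_mx 0 j), 0).
pose s' := map liftL s ++ (map f1 (enum 'I_d) ++ (map f2 (enum 'I_d) ++ map f3 (enum 'I_d))).
pose se' := map liftL se.
pose Q' := eqset s' se'.
have Q'E y z : Q' (row_mx y z) <->
    Q y /\ @unit_cube R d (y *m T + t) /\ (forall j, 0 <= z 0 j).
  rewrite QE; split.
    move=> [/sat_cat [/sat_map H1 /sat_cat [/sat_map H2 /sat_cat [/sat_map H3 /sat_map H4]]] He].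
    split; first split.
    - by move=> p ps; have := H1 p ps; rewrite /= dotv_row_mx dotv0l addr0.
    - by move=> p ps; have := He _ (map_f liftL ps); rewrite /= dotv_row_mx dotv0l addr0.
    split.
      move=> j; have := H2 j (mem_enum _ j); have := H3 j (mem_enum _ j).
      rewrite /= !dotv_row_mx !dotv0l !addr0 dotvNl !dotv_colv [(_ + t) 0 j]mxE.
      move=> h1 h2; apply/andP; split; lra.
    move=> j; have := H4 j (mem_enum _ j).
    by rewrite /= dotv_row_mx dotv0l add0r dotvNl dotv_delta oppr_le0.
  move=> [[H1 He] [cy z0]]; split.
    apply/sat_cat; split.
      by apply/sat_map => p ps; rewrite /= dotv_row_mx dotv0l addr0; apply: H1.
    apply/sat_cat; split.
      apply/sat_map => j _; have := cy j; rewrite [(_ + t) 0 j]mxE.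
      rewrite /= dotv_row_mx dotv0l addr0 dotv_colv => /andP[h1 h2]; lra.
    apply/sat_cat; split.
      apply/sat_map => j _; have := cy j; rewrite [(_ + t) 0 j]mxE.
      rewrite /= dotv_row_mx dotv0l addr0 dotvNl dotv_colv => /andP[h1 h2]; lra.
    apply/sat_map => j _.
    by rewrite /= dotv_row_mx dotv0l add0r dotvNl dotv_delta oppr_le0.
  move=> p /mapP[q qs ->]; rewrite /= dotv_row_mx dotv0l addr0; exact: He.
pose T' := col_mx T (1%:M : 'M[R]_d).
have imE y z : row_mx y z *m T' + t = y *m T + t + z.
  by rewrite mul_row_col mulmx1 addrAC.
pose K := aff_image T' t Q'.
have KE x : K x <-> exists (y : 'rV[R]_l) (z : 'rV[R]_d), Q y /\ @unit_cube R d (y *m T + t) /\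
    (forall j, 0 <= z 0 j) /\ x = y *m T + t + z.
  split.
    move=> [w Qw <-]; rewrite -(hsubmxK w) in Qw *.
    move/Q'E: Qw => [Qy [cy z0]].
    by exists (lsubmx w), (rsubmx w); rewrite imE.
  move=> [y [z [Qy [cy [z0 ->]]]]]; exists (row_mx y z); last exact: imE.
  by apply/Q'E.
have hK : (M%:E <= xc K)%E.
  apply: Hyp.
  - by apply/poly_ipoly; apply: ipoly_image; apply: ipoly_eqset.
  - move=> x [pp Ppp ppx].
    pose x0 := \row_i Num.min (x 0 i) 1.
    have cpp := conv_cube V01 Ppp.
    have C0 : (up_hull (conv_hull V) `&` @unit_cube R d) x0.
      split.
        exists pp => // i; rewrite mxE le_min ppx.
        by case/andP: (cpp i).
      move=> i; rewrite mxE le_min ge_min lexx orbT andbT ler01 andbT.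
      by case/andP: (cpp i) => h _; apply: le_trans h (ppx i).
    have [y Qy yE] := CQ _ C0.
    apply/KE; exists y, (x - x0); split => //; split; first by rewrite yE; case: C0.
    split; first by move=> j; rewrite !mxE subr_ge0 ge_min lexx.
    by rewrite yE addrC subrK.
  - move=> x /KE [y [z [Qy [cy [z0 ->]]]]].
    have Ay : aff_image T t Q (y *m T + t) by exists y.
    have := sep_main (ord0 : 'I_(size V)) d0 V01 eps01 rd Ay cy.
    move=> [pp Ppp ppy].
    exists ((1 - eps)^-1 *: (y *m T + t + z)).
      exists pp => // i.
      apply: le_trans (ppy i) _.
      rewrite [X in X <= _]mxE [X in _ <= X]mxE.
      apply: ler_wpM2l; first by rewrite invr_ge0 subr_ge0 ltW //; case/andP: eps01.
      by rewrite [X in _ <= X]mxE lerDl.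
    rewrite scalerA mulfV ?scale1r //.
    by case/andP: eps01 => _ h; rewrite subr_eq0 eq_sym lt_eqF.
have h1 : (xc K <= num_facets Q')%E.
  apply: ereal_inf_lbound; exists (l + d)%N, Q', T', t; split => //.
  by apply/poly_ipoly; apply: ipoly_eqset.
have h2 : (num_facets Q' <= (size s')%:R%:E)%E.
  by apply: ereal_inf_lbound; exists (size s'); split => //; apply: descr_of_seq.
have szE : size s' = (m + (d + (d + d)))%N.
  by rewrite !size_cat !size_map sz -enumT size_enum_ord.
have hM : M <= (size s')%:R.
  by rewrite -lee_fin; apply: le_trans hK (le_trans h1 h2).
move: hM; rewrite szE !natrD lee_fin => hM; lra.
Qed.
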